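(* Let $p,q\geq1$ be integers and let $(\vartheta(s),\alpha(s))$ be a trajectory of the differential system $$\dot\vartheta=3\sin\vartheta\cos\vartheta\sin(\alpha-\vartheta),\qquad \dot\alpha=q\cos\alpha\cos\vartheta-p\sin\alpha\sin\vartheta.$$ Suppose that for some $s_0$ one has $0<\vartheta(s_0)<\pi/2$ and $\vartheta(s_0)-\pi/2\leq\alpha(s_0)\leq\vartheta(s_0)+\pi/2$, i.e. the trajectory is in $R_1=\{(\vartheta,\alpha):0\leq\vartheta\leq\pi/2,\ \vartheta-\pi/2\leq\alpha\leq\vartheta+\pi/2\}$. Then the trajectory remains in $R_1$ for all $s\geq s_0$. *)

(* Defs.v *)
From Stdlib Require Import Reals Lra.
Open Scope R_scope.

Definition trajectory (p q : nat) (theta alpha : R -> R) : Prop :=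
  forall s : R,
    derivable_pt_lim theta s
      (3 * sin (theta s) * cos (theta s) * sin (alpha s - theta s)) /\
    derivable_pt_lim alpha s
      (INR q * cos (alpha s) * cos (theta s) - INR p * sin (alpha s) * sin (theta s)).

Definition inR1 (th al : R) : Prop :=
  0 <= th <= PI / 2 /\ th - PI / 2 <= al <= th + PI / 2.

(* Main.v *)
Require Import Defs.
From Stdlib Require Import Reals.
From Stdlib Require Import Lra Psatz.
Open Scope R_scope.

Lemma dl_ext f x l l' : l = l' -> derivable_pt_lim f x l -> derivable_pt_lim f x l'.
Proof. intros ->; auto. Qed.

Lemma cont_eps f x l : derivable_pt_lim f x l -> forall eps, 0 < eps ->
  exists del, 0 < del /\ forall y, Rabs (y - x) < del -> Rabs (f y - f x) < eps.
Proof.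
  intros Hd eps He.
  pose proof (derivable_continuous_pt f x (exist _ l Hd)) as H.
  unfold continuity_pt, continue_in, limit1_in, limit_in in H; simpl in H.
  destruct (H eps He) as [del [Hd0 H2]].
  exists del; split; auto. intros y Hy.
  destruct (Req_dec y x) as [->|Hne].
  - rewrite Rminus_diag, Rabs_R0; auto.
  - apply H2. unfold D_x, no_cond, R_dist. split; auto.
Qed.

Lemma stay_nonpos (e l : R -> R) (a b : R) :
  a <= b ->
  (forall t, derivable_pt_lim e t (l t)) ->
  e a <= 0 ->
  (forall t, a <= t <= b -> e t = 0 -> l t < 0) ->
  e b <= 0.
Proof.
  intros hab hd ha hz.
  destruct (Rle_dec (e b) 0) as [h|h]; [exact h|exfalso]. apply Rnot_le_lt in h.
  set (S := fun t => a <= t <= b /\ e t <= 0).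
  assert (Hb : bound S) by (exists b; intros t [[_ Ht] _]; auto).
  assert (Hne : exists x, S x) by (exists a; split; [lra|auto]).
  destruct (completeness S Hb Hne) as [m [Hub Hlub]].
  assert (Ham : a <= m) by (apply Hub; split; [lra|auto]).
  assert (Hmb : m <= b) by (apply Hlub; intros t [[_ Ht] _]; auto).
  assert (Hem : e m <= 0).
  { destruct (Rle_dec (e m) 0) as [h'|h']; auto. apply Rnot_le_lt in h'.
    destruct (cont_eps e m (l m) (hd m) (e m) h') as [del [Hdel Hc]].
    assert (m <= m - del/2).
    { apply Hlub. intros t St. destruct (Rle_dec t (m - del/2)) as [r|r]; auto.
      exfalso. apply Rnot_le_lt in r. assert (t <= m) by (apply Hub; auto).
      assert (Rabs (t - m) < del) by (apply Rabs_def1; lra).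
      specialize (Hc t H0). apply Rabs_def2 in Hc. destruct St. lra. }
    lra. }
  assert (Hmb' : m < b) by (destruct Hmb as [Hlt|Heq]; [auto| rewrite Heq in Hem; lra]).
  assert (Hem0 : e m = 0).
  { destruct Hem as [h'|]; auto. exfalso.
    destruct (cont_eps e m (l m) (hd m) (- e m)) as [del [Hdel Hc]]; [lra|].
    set (t := Rmin b (m + del/2)).
    assert (m < t) by (unfold t; apply Rmin_glb_lt; lra).
    assert (t <= b) by (unfold t; apply Rmin_l).
    assert (t <= m + del/2) by (unfold t; apply Rmin_r).
    assert (Rabs (t - m) < del) by (apply Rabs_def1; lra).
    specialize (Hc t H2). apply Rabs_def2 in Hc.
    assert (t <= m) by (apply Hub; split; [lra|lra]). lra. }
  assert (Hl : l m < 0) by (apply hz; auto; lra).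
  destruct (hd m (- l m / 2)) as [delta Hdelta]; [lra|].
  pose proof (cond_pos delta) as Hdp.
  set (hh := Rmin (b - m) (delta/2)).
  assert (0 < hh) by (unfold hh; apply Rmin_glb_lt; lra).
  assert (hh <= b - m) by (unfold hh; apply Rmin_l).
  assert (hh <= delta/2) by (unfold hh; apply Rmin_r).
  assert (Rabs hh < delta) by (rewrite Rabs_right; lra).
  specialize (Hdelta hh ltac:(lra) H2). apply Rabs_def2 in Hdelta.
  rewrite Hem0 in Hdelta.
  set (qq := (e (m + hh) - 0) / hh) in Hdelta.
  assert (e (m + hh) = qq * hh) by (unfold qq; field; lra).
  assert (e (m + hh) < 0) by nra.
  assert (m + hh <= m) by (apply Hub; split; [lra|lra]). lra.
Qed.

Theorem lemma4p7 (p q : nat) (hp : (1 <= p)%nat) (hq : (1 <= q)%nat)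
  (theta alpha : R -> R) (htraj : trajectory p q theta alpha) (s0 : R)
  (h0 : 0 < theta s0 < PI / 2)
  (h1 : theta s0 - PI / 2 <= alpha s0 <= theta s0 + PI / 2) :
  forall s : R, s0 <= s -> inR1 (theta s) (alpha s).
Proof.
  set (th' := fun s => 3 * sin (theta s) * cos (theta s) * sin (alpha s - theta s)).
  set (al' := fun s => INR q * cos (alpha s) * cos (theta s) - INR p * sin (alpha s) * sin (theta s)).
  assert (Hth : forall s, derivable_pt_lim theta s (th' s)) by (intro s; apply (htraj s)).
  assert (Hal : forall s, derivable_pt_lim alpha s (al' s)) by (intro s; apply (htraj s)).
  assert (Hsin : forall s, derivable_pt_lim (fun u => sin (theta u)) s (cos (theta s) * th' s)).
  { intro s. exact (derivable_pt_lim_comp theta sin s _ _ (Hth s) (derivable_pt_lim_sin _)). }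
  assert (Hcos : forall s, derivable_pt_lim (fun u => cos (theta u)) s (- sin (theta s) * th' s)).
  { intro s. exact (derivable_pt_lim_comp theta cos s _ _ (Hth s) (derivable_pt_lim_cos _)). }
  assert (Hex : forall s, derivable_pt_lim (fun u => exp (6 * u)) s (exp (6 * s) * 6)).
  { intro s. eapply dl_ext; [|exact (derivable_pt_lim_comp (mult_real_fct 6 id) exp s _ _
        (derivable_pt_lim_scal id 6 s _ (derivable_pt_lim_id s)) (derivable_pt_lim_exp _))].
    unfold mult_real_fct, id. ring. }
  assert (Hmono : forall (F F' : R -> R), (forall s, derivable_pt_lim F s (F' s)) ->
            (forall s, 0 <= F' s) -> forall s, s0 <= s -> F s0 <= F s).
  { intros F F' HF HF' s Hs. destruct Hs as [Hs|Hs]; [|rewrite Hs; lra].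
    destruct (MVT_cor2 F F' s0 s Hs (fun c _ => HF c)) as [c [Hc _]].
    specialize (HF' c). nra. }
  assert (HW : forall s, s0 <= s -> 0 < sin (theta s) * sin (theta s)).
  { intros s Hs.
    set (F := fun u => sin (theta u) * sin (theta u) * exp (6 * u)).
    assert (HF : forall u, derivable_pt_lim F u
        ((cos (theta u) * th' u * sin (theta u) + sin (theta u) * (cos (theta u) * th' u))
          * exp (6 * u) + sin (theta u) * sin (theta u) * (exp (6 * u) * 6))).
    { intro u. exact (derivable_pt_lim_mult (fun u => sin (theta u) * sin (theta u)) _ u _ _
        (derivable_pt_lim_mult _ _ u _ _ (Hsin u) (Hsin u)) (Hex u)). }
    pose proof (Hmono F _ HF) as HM.
    assert (0 < F s0).
    { unfold F. pose proof (sin_gt_0 (theta s0) ltac:(lra) ltac:(pose proof PI_RGT_0; lra)).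
      pose proof (exp_pos (6 * s0)). apply Rmult_lt_0_compat; nra. }
    assert (0 < F s).
    { eapply Rlt_le_trans; [eassumption|]. apply HM; auto.
      intro u. unfold th'. pose proof (exp_pos (6*u)).
      pose proof (SIN_bound (alpha u - theta u)). pose proof (sin2_cos2 (theta u)).
      unfold Rsqr in *.
      set (a := sin (theta u)) in *. set (b := cos (theta u)) in *.
      set (c := sin (alpha u - theta u)) in *.
      assert (Hbc : 0 <= b*b*c + 1) by nra.
      assert (0 <= (a*a) * (b*b*c+1)) by (apply Rmult_le_pos; nra).
      assert (0 <= (2*a*(b*(3*a*b*c)) + a*a*6)) by nra.
      assert (0 <= (2*a*(b*(3*a*b*c)) + a*a*6) * exp (6*u)) by (apply Rmult_le_pos; lra).
      nra. }
    unfold F in H0. pose proof (exp_pos (6 * s)).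
    destruct (Rlt_le_dec 0 (sin (theta s) * sin (theta s))); auto. nra. }
  assert (HV : forall s, s0 <= s -> 0 < cos (theta s) * cos (theta s)).
  { intros s Hs.
    set (F := fun u => cos (theta u) * cos (theta u) * exp (6 * u)).
    assert (HF : forall u, derivable_pt_lim F u
        ((- sin (theta u) * th' u * cos (theta u) + cos (theta u) * (- sin (theta u) * th' u))
          * exp (6 * u) + cos (theta u) * cos (theta u) * (exp (6 * u) * 6))).
    { intro u. exact (derivable_pt_lim_mult (fun u => cos (theta u) * cos (theta u)) _ u _ _
        (derivable_pt_lim_mult _ _ u _ _ (Hcos u) (Hcos u)) (Hex u)). }
    pose proof (Hmono F _ HF) as HM.
    assert (0 < F s0).
    { unfold F. pose proof (cos_gt_0 (theta s0) ltac:(pose proof PI_RGT_0; lra) ltac:(lra)).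
      pose proof (exp_pos (6 * s0)). apply Rmult_lt_0_compat; nra. }
    assert (0 < F s).
    { eapply Rlt_le_trans; [eassumption|]. apply HM; auto.
      intro u. unfold th'. pose proof (exp_pos (6*u)).
      pose proof (SIN_bound (alpha u - theta u)). pose proof (sin2_cos2 (theta u)).
      unfold Rsqr in *.
      set (a := sin (theta u)) in *. set (b := cos (theta u)) in *.
      set (c := sin (alpha u - theta u)) in *.
      assert (Hbc : 0 <= 1 - a*a*c) by nra.
      assert (0 <= (b*b) * (1 - a*a*c)) by (apply Rmult_le_pos; nra).
      assert (0 <= (-2*a*b*(3*a*b*c) + b*b*6)) by nra.
      assert (0 <= (-2*a*b*(3*a*b*c) + b*b*6) * exp (6*u)) by (apply Rmult_le_pos; lra).
      nra. }
    unfold F in H0. pose proof (exp_pos (6 * s)).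
    destruct (Rlt_le_dec 0 (cos (theta s) * cos (theta s))); auto. nra. }
  assert (Hcont : continuity theta).
  { intro x. apply (derivable_continuous_pt theta x (exist _ _ (Hth x))). }
  assert (Hrange : forall s, s0 <= s -> 0 < theta s < PI / 2).
  { intros s Hs. split.
    - destruct (Rlt_le_dec 0 (theta s)) as [r|r]; auto. exfalso.
      destruct r as [r|r].
      + destruct (IVT (fun u => - theta u) s0 s) as [z [Hz Hz0]].
        * apply continuity_opp; auto.
        * destruct Hs as [Hs'|Hs']; [lra|subst; lra].
        * lra.
        * lra.
        * specialize (HW z ltac:(lra)). assert (theta z = 0) by lra.
          rewrite H, sin_0 in HW. lra.
      + specialize (HW s Hs). rewrite r, sin_0 in HW. lra.
    - destruct (Rlt_le_dec (theta s) (PI/2)) as [r|r]; auto. exfalso.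
      destruct r as [r|r].
      + destruct (IVT (fun u => theta u - PI/2) s0 s) as [z [Hz Hz0]].
        * apply continuity_minus; auto. apply continuity_const. intros a b; auto.
        * destruct Hs as [Hs'|Hs']; [lra|subst; lra].
        * lra.
        * lra.
        * specialize (HV z ltac:(lra)). assert (theta z = PI/2) by lra.
          rewrite H, cos_PI2 in HV. lra.
      + specialize (HV s Hs). rewrite <- r, cos_PI2 in HV. lra. }
  set (e := fun u => (alpha u - theta u) * (alpha u - theta u) - PI/2 * (PI/2)).
  set (l := fun u => (al' u - th' u) * (alpha u - theta u) + (alpha u - theta u) * (al' u - th' u) - 0).
  assert (He : forall u, derivable_pt_lim e u (l u)).
  { intro u. pose proof (derivable_pt_lim_minus alpha theta u _ _ (Hal u) (Hth u)) as Hd.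
    exact (derivable_pt_lim_minus _ (fct_cte (PI/2 * (PI/2))) u _ _
      (derivable_pt_lim_mult _ _ u _ _ Hd Hd) (derivable_pt_lim_const _ u)). }
  intros s Hs.
  pose proof (Hrange s Hs).
  assert (Hes : e s <= 0).
  { apply (stay_nonpos e l s0 s Hs He).
    - unfold e. nra.
    - intros t Ht Het. destruct (Hrange t ltac:(lra)) as [Ht1 Ht2].
      pose proof PI_RGT_0.
      pose proof (sin_gt_0 (theta t) Ht1 ltac:(lra)).
      pose proof (cos_gt_0 (theta t) ltac:(lra) Ht2).
      assert (HP : 0 <= INR p) by apply pos_INR.
      assert (HQ : 0 <= INR q) by apply pos_INR.
      unfold e in Het.
      assert (Hd : alpha t - theta t = PI/2 \/ alpha t - theta t = - (PI/2)) by nra.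
      unfold l, al', th'.
      destruct Hd as [Hd|Hd].
      + replace (alpha t) with (theta t + PI/2) by lra.
        replace (theta t + PI/2 - theta t) with (PI/2) by ring.
        rewrite cos_plus, sin_plus, cos_PI2, sin_PI2.
        assert (0 < PI * ((INR p + INR q + 3) * (sin (theta t) * cos (theta t)))) by
          (apply Rmult_lt_0_compat; [lra|apply Rmult_lt_0_compat; nra]).
        nra.
      + replace (alpha t) with (theta t + - (PI/2)) by lra.
        replace (theta t + - (PI/2) - theta t) with (- (PI/2)) by ring.
        rewrite cos_plus, sin_plus, cos_neg, sin_neg, cos_PI2, sin_PI2.
        assert (0 < PI * ((INR p + INR q + 3) * (sin (theta t) * cos (theta t)))) by
          (apply Rmult_lt_0_compat; [lra|apply Rmult_lt_0_compat; nra]).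
        nra. }
  unfold inR1, e in *. pose proof PI_RGT_0. split; [lra|]. split; nra.
Qed.
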